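(* Consider the reduced (limit) problem of the repeated wage theft game with fixed strategies and time-converging worker forecasts, as described in the context, and suppose $C'(0)<Py_H-Py_L$. Then there exists an optimal solution $(a^*,w_H^*,w_L^*,b_H^*,b_L^* )$ of this problem with $a^*\in(0,1)$ and $b_H^*=b_L^*=0$.
   Context: Fix $P>0$, $y_H>y_L\ge0$, a real number $u$ and $\gamma\in(0,1]$. Let $C:[0,1)\to\mathbb{R}$ satisfy $C(0)=0$, increasing, strictly convex, twice differentiable, $C(a)\to\infty$ as $a\to1$; let $\eta:[0,\infty)\to\mathbb{R}$ be strictly convex, increasing, twice differentiable with $\eta(0)=0$. In the repeated wage theft game, in each period $t$ the employer promises wages $w_i^t$ and steals $b_i^t$ ($i\in\{H,L\}$), and the worker, forecasting theft $\hat b_i^t$ from past thefts $b_i^1,\dots,b_i^{t-1}$, chooses effort as if receiving $(w_i^t-\hat b_i^t)^+$. A forecast is time-converging if whenever $b_i^t=b_i$ for all $t\ge t_0$, $\hat b_i^t\to b_i$ as $t\to\infty$. When the employer uses a fixed strategy $(w_H,w_L,b_H,b_L)$ in every period and the worker uses a time-converging forecast, the game reduces to the following problem: choose $a,w_H,w_L,b_H,b_L$ to maximize $a\,(Py_H-w_H+b_H-\gamma\eta(b_H))+(1-a)\,(Py_L-w_L+b_L-\gamma\eta(b_L))$ subject to $a\in\arg\max_{a'\in[0,1)}\{a'(w_H-b_H)+(1-a')(w_L-b_L)-C(a')\}$; $a(w_H-b_H)+(1-a)(w_L-b_L)-C(a)\ge u$; $0\le b_L\le w_L$, $0\le b_H\le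 w_H$; $a\in[0,1)$. *)

(* Defs.v *)
From Stdlib Require Import Reals.
From Coquelicot Require Import Coquelicot.
Open Scope R_scope.

Definition right_deriv (f : R -> R) (x l : R) : Prop :=
  filterlim (fun h => (f (x + h) - f x) / h) (at_right 0) (locally l).

(* df is the derivative of f on [0,b) (one-sided at the endpoint 0);
   b = p_infty encodes [0, +oo). *)
Definition deriv_on_Ico0 (b : Rbar) (f df : R -> R) : Prop :=
  right_deriv f 0 (df 0) /\
  (forall x, 0 < x -> Rbar_lt x b -> is_derive f x (df x)).

Definition twice_diff_on_Ico0 (b : Rbar) (f df d2f : R -> R) : Prop :=
  deriv_on_Ico0 b f df /\ deriv_on_Ico0 b df d2f.

Definition in_Ico0 (b : Rbar) (x : R) : Prop := 0 <= x /\ Rbar_lt x b.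

Definition increasing_on_Ico0 (b : Rbar) (f : R -> R) : Prop :=
  forall x y, in_Ico0 b x -> in_Ico0 b y -> x < y -> f x < f y.

Definition strictly_convex_on_Ico0 (b : Rbar) (f : R -> R) : Prop :=
  forall x y t, in_Ico0 b x -> in_Ico0 b y -> x <> y -> 0 < t < 1 ->
    f (t * x + (1 - t) * y) < t * f x + (1 - t) * f y.

Definition worker_payoff (C : R -> R) (wH wL bH bL a' : R) : R :=
  a' * (wH - bH) + (1 - a') * (wL - bL) - C a'.

Definition employer_obj (P yH yL gamma : R) (eta : R -> R)
    (a wH wL bH bL : R) : R :=
  a * (P * yH - wH + bH - gamma * eta bH)
  + (1 - a) * (P * yL - wL + bL - gamma * eta bL).

Definition feasible (C : R -> R) (u a wH wL bH bL : R) : Prop :=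
  (0 <= a < 1) /\
  (forall a', 0 <= a' < 1 ->
     worker_payoff C wH wL bH bL a' <= worker_payoff C wH wL bH bL a) /\
  worker_payoff C wH wL bH bL a >= u /\
  (0 <= bL <= wL) /\ (0 <= bH <= wH).

Definition optimal (P yH yL gamma u : R) (C eta : R -> R)
    (a wH wL bH bL : R) : Prop :=
  feasible C u a wH wL bH bL /\
  forall a' wH' wL' bH' bL', feasible C u a' wH' wL' bH' bL' ->
    employer_obj P yH yL gamma eta a' wH' wL' bH' bL'
    <= employer_obj P yH yL gamma eta a wH wL bH bL.

(* Main.v *)
Require Import Defs.
From Stdlib Require Import Reals Lra.
From Coquelicot Require Import Coquelicot.
Open Scope R_scope.

Lemma rd_bound f x0 l : right_deriv f x0 l ->
  exists d, 0 < d /\ forall h, 0 < h < d -> Rabs (f (x0+h) - f x0) <= h*(Rabs l + 1).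
Proof.
  intros H. apply filterlim_locally with (eps := mkposreal 1 Rlt_0_1) in H.
  destruct H as [d Hd]. exists d. split; [apply cond_pos|].
  intros h [h0 hd].
  assert (Hb : ball 0 d h).
  { unfold ball; simpl. unfold AbsRing_ball, abs, minus, plus, opp; simpl.
    rewrite Rabs_pos_eq; lra. }
  specialize (Hd h Hb h0). revert Hd.
  unfold ball; simpl. unfold AbsRing_ball, abs, minus, plus, opp; simpl.
  intros Hd.
  set (q := (f (x0 + h) - f x0) / h) in *.
  assert (E : f (x0+h) - f x0 = q * h) by (unfold q; field; lra).
  rewrite E, Rabs_mult, (Rabs_pos_eq h) by lra.
  assert (Rabs q <= Rabs l + 1).
  { replace q with (l + (q + - l)) by ring.
    eapply Rle_trans; [apply Rabs_triang|]. lra. }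
  nra.
Qed.

Lemma Rmax_lip u a b : Rabs (Rmax u a - Rmax u b) <= Rabs (a - b).
Proof. unfold Rmax; repeat destruct Rle_dec; unfold Rabs; repeat destruct Rcase_abs; lra. Qed.

Lemma lip_cont (f : R -> R) : (forall a b, Rabs (f a - f b) <= Rabs (a - b)) ->
  forall x, continuity_pt f x.
Proof.
  intros Hf x eps He. exists eps. split; auto.
  intros y [_ Hy]. unfold R_dist in *. simpl in *. unfold R_dist in *.
  eapply Rle_lt_trans; [apply Hf|]. auto.
Qed.

Lemma tangent (C dC : R -> R) A x :
  strictly_convex_on_Ico0 (Finite 1) C -> 0 < A < 1 -> 0 <= x < 1 ->
  is_derive C A (dC A) -> C A + dC A * (x - A) <= C x.
Proof.
  intros Hconv HA Hx Hd.
  destruct (Req_dec x A) as [->|Hne]; [lra|].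
  apply Rnot_lt_le; intros Hlt.
  apply is_derive_Reals in Hd.
  set (D := C A + dC A * (x - A) - C x).
  assert (HD : 0 < D) by (unfold D; lra).
  assert (Hxa : 0 < Rabs (x - A)) by (apply Rabs_pos_lt; lra).
  destruct (Hd (D / (2 * Rabs (x - A)))) as [d Hdd].
  { apply Rdiv_lt_0_compat; lra. }
  set (t := Rmin (1/2) (d / (2 * Rabs (x - A)))).
  assert (Ht0 : 0 < t).
  { unfold t; apply Rmin_glb_lt; [lra|]. apply Rdiv_lt_0_compat; [apply cond_pos|lra]. }
  assert (Ht1 : t <= 1/2) by apply Rmin_l.
  assert (Ht2 : t <= d / (2 * Rabs (x - A))) by apply Rmin_r.
  assert (Hh : Rabs (t * (x - A)) < d).
  { rewrite Rabs_mult, Rabs_pos_eq by lra.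
    apply Rmult_le_compat_r with (r := Rabs (x - A)) in Ht2; [|lra].
    replace (d / (2 * Rabs (x - A)) * Rabs (x - A)) with (d/2) in Ht2 by (field; lra).
    pose proof (cond_pos d). lra. }
  assert (Hne0 : t * (x - A) <> 0).
  { apply Rmult_integral_contrapositive; split; lra. }
  specialize (Hdd _ Hne0 Hh).
  assert (Hc : C (t * x + (1 - t) * A) < t * C x + (1 - t) * C A).
  { apply Hconv; try (split; simpl; lra); lra. }
  replace (t * x + (1 - t) * A) with (A + t * (x - A)) in Hc by ring.
  set (h := t * (x - A)) in *.
  set (q := (C (A + h) - C A) / h) in *.
  assert (Eq : C (A + h) - C A = q * h) by (unfold q; field; auto).
  assert (H1 : q * h < t * (C x - C A)) by lra.
  unfold h in H1.
  assert (H2 : q * (x - A) < C x - C A).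
  { apply Rmult_lt_reg_l with t; lra. }
  assert (H3 : Rabs ((q - dC A) * (x - A)) < D / 2).
  { rewrite Rabs_mult.
    apply Rmult_lt_compat_r with (r := Rabs (x - A)) in Hdd; [|lra].
    replace (D / (2 * Rabs (x - A)) * Rabs (x - A)) with (D/2) in Hdd by (field; lra).
    lra. }
  apply Rabs_def2 in H3. unfold D in *. nra.
Qed.

Lemma foc (C dC : R -> R) A Dl :
  0 < A < 1 -> is_derive C A (dC A) ->
  (forall a, 0 <= a < 1 -> a * Dl - C a <= A * Dl - C A) -> dC A <= Dl.
Proof.
  intros HA Hd Hic. apply Rnot_lt_le; intros Hlt.
  apply is_derive_Reals in Hd.
  destruct (Hd ((dC A - Dl)/2)) as [d Hdd]; [lra|].
  set (h := - Rmin (A/2) (d/2)).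
  assert (Hm1 : Rmin (A/2) (d/2) <= A/2) by apply Rmin_l.
  assert (Hm2 : Rmin (A/2) (d/2) <= d/2) by apply Rmin_r.
  assert (Hm0 : 0 < Rmin (A/2) (d/2)).
  { apply Rmin_glb_lt; pose proof (cond_pos d); lra. }
  assert (Hne : h <> 0) by (unfold h; lra).
  assert (Hh : Rabs h < d).
  { unfold h; rewrite Rabs_Ropp, Rabs_pos_eq by lra. pose proof (cond_pos d); lra. }
  specialize (Hdd h Hne Hh).
  specialize (Hic (A + h)). assert (HH : 0 <= A + h < 1) by (unfold h; lra).
  specialize (Hic HH).
  set (q := (C (A + h) - C A) / h) in *.
  assert (Eq : C (A + h) - C A = q * h) by (unfold q; field; auto).
  apply Rabs_def2 in Hdd.
  assert (h < 0) by (unfold h; lra).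
  nra.
Qed.

Lemma Vcont (C dC : R -> R) K D u c : continuity_pt C c -> continuity_pt dC c ->
  continuity_pt (fun a => K + a*D - C a - Rmax u (a*dC a - C a)) c.
Proof.
  intros H1 H2.
  change (continuity_pt ((fct_cte K + id * fct_cte D - C) - comp (Rmax u) (id * dC - C))%F c).
  apply continuity_pt_minus.
  - apply continuity_pt_minus; [|auto]. apply continuity_pt_plus.
    + apply continuity_pt_const. intros a b; reflexivity.
    + apply continuity_pt_mult; [apply derivable_continuous_pt, derivable_pt_id|].
      apply continuity_pt_const. intros a b; reflexivity.
  - apply continuity_pt_comp.
    + apply continuity_pt_minus; auto. apply continuity_pt_mult; auto.
      apply derivable_continuous_pt, derivable_pt_id.
    + apply lip_cont. apply Rmax_lip.
Qed.

Lemma deriv_cont f df x : is_derive f x (df x) -> continuity_pt f x.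
Proof.
  intros H. apply is_derive_Reals in H.
  apply derivable_continuous_pt. exists (df x). exact H.
Qed.

Theorem theorem2
  (P yH yL u gamma : R) (C dC d2C eta deta d2eta : R -> R)
  (hP : 0 < P) (hy : yL < yH) (hyL : 0 <= yL)
  (hgamma : 0 < gamma <= 1)
  (hC0 : C 0 = 0)
  (hCinc : increasing_on_Ico0 (Finite 1) C)
  (hCconv : strictly_convex_on_Ico0 (Finite 1) C)
  (hCdiff : twice_diff_on_Ico0 (Finite 1) C dC d2C)
  (hClim : filterlim C (at_left 1) (Rbar_locally p_infty))
  (heta0 : eta 0 = 0)
  (hetainc : increasing_on_Ico0 p_infty eta)
  (hetaconv : strictly_convex_on_Ico0 p_infty eta)
  (hetadiff : twice_diff_on_Ico0 p_infty eta deta d2eta)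
  (hC'0 : dC 0 < P * yH - P * yL) :
  exists a wH wL bH bL,
    optimal P yH yL gamma u C eta a wH wL bH bL /\
    0 < a < 1 /\ bH = 0 /\ bL = 0.
Proof.
  set (D := P * yH - P * yL) in *.
  assert (HD : 0 < D) by (unfold D; nra).
  destruct hCdiff as [[hCr hCd] [hdCr hdCd]].
  assert (hCd' : forall x, 0 < x < 1 -> is_derive C x (dC x))
    by (intros x Hx; apply hCd; simpl; lra).
  assert (hdCd' : forall x, 0 < x < 1 -> is_derive dC x (d2C x))
    by (intros x Hx; apply hdCd; simpl; lra).
  clear hCd hdCd.
  assert (Heta : forall b, 0 <= b -> 0 <= eta b).
  { intros b Hb. destruct (Req_dec b 0) as [->|Hn]; [lra|].
    rewrite <- heta0. left. apply hetainc; try (split; simpl; auto; lra); lra. }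
  set (V := fun a => P*yL + a*D - C a - Rmax u (a*dC a - C a)).
  assert (Hg : forall a, 0 < a < 1 -> 0 <= a * dC a - C a).
  { intros a Ha. pose proof (tangent C dC a 0 hCconv Ha ltac:(lra) (hCd' a Ha)). lra. }
  assert (Hub : forall a' wH' wL' bH' bL', feasible C u a' wH' wL' bH' bL' ->
     employer_obj P yH yL gamma eta a' wH' wL' bH' bL' <= V a').
  { intros a' wH' wL' bH' bL' [Ha [Hic [Hpart [HbL HbH]]]].
    unfold worker_payoff in *.
    set (U := a' * (wH' - bH') + (1 - a') * (wL' - bL') - C a') in *.
    assert (HU : a' * dC a' - C a' <= U).
    { destruct (Req_dec a' 0) as [->|Hn].
      - specialize (Hic 0 ltac:(lra)). rewrite hC0 in *. lra.
      - assert (Ha' : 0 < a' < 1) by lra.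
        assert (dC a' <= (wH' - bH') - (wL' - bL')).
        { apply (foc C dC a'); auto. intros a Hx. specialize (Hic a Hx). unfold U in Hic. lra. }
        unfold U. nra. }
    assert (HM : Rmax u (a' * dC a' - C a') <= U) by (apply Rmax_lub; lra).
    unfold employer_obj, V.
    assert (0 <= a' * (gamma * eta bH')) by (apply Rmult_le_pos; [lra|]; apply Rmult_le_pos; [lra|]; apply Heta; lra).
    assert (0 <= (1 - a') * (gamma * eta bL')) by (apply Rmult_le_pos; [lra|]; apply Rmult_le_pos; [lra|]; apply Heta; lra).
    unfold U, D in *. nra. }
  assert (Hnear1 : exists b, 0 < b < 1 /\ forall a, b < a < 1 -> V a < V 0).
  { assert (Hl := hClim (fun y => P*yL + D - u - V 0 < y)).
    destruct Hl as [d Hd].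
    { exists (P*yL + D - u - V 0). intros x Hx. exact Hx. }
    exists (Rmax (1/2) (1 - d/2)). split.
    { split; [apply Rlt_le_trans with (1/2); [lra|apply Rmax_l]|].
      apply Rmax_lub_lt; [lra|]. pose proof (cond_pos d); lra. }
    intros a [Ha1 Ha2].
    assert (Hm1 := Rmax_l (1/2) (1 - d/2)). assert (Hm2 := Rmax_r (1/2) (1 - d/2)).
    assert (Hb : ball 1 d a).
    { unfold ball; simpl. unfold AbsRing_ball, abs, minus, plus, opp; simpl.
      rewrite Rabs_left by lra. pose proof (cond_pos d); lra. }
    specialize (Hd a Hb Ha2). simpl in Hd.
    assert (HM := Rmax_l u (a * dC a - C a)).
    unfold V at 1. nra. }
  destruct Hnear1 as [b [Hb Hbnear]].
  destruct (rd_bound C 0 (dC 0) hCr) as [d1 [Hd1 Hb1]].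
  destruct (rd_bound dC 0 (d2C 0) hdCr) as [d2 [Hd2 Hb2]].
  set (K1 := Rabs (dC 0) + 1) in *. set (K2 := Rabs (d2C 0) + 1) in *.
  assert (HK1 : 0 < K1) by (unfold K1; pose proof (Rabs_pos (dC 0)); lra).
  assert (HK2 : 0 < K2) by (unfold K2; pose proof (Rabs_pos (d2C 0)); lra).
  assert (HV0 : V 0 = P * yL - Rmax u 0).
  { unfold V. rewrite hC0. f_equal; [ring|f_equal; ring]. }
  assert (Hsmall : exists e, 0 < e < 1 /\ V 0 < V e).
  { set (e := Rmin (Rmin (1/2) (d2/2)) ((D - dC 0) / (2 * K2))).
    assert (He1 : e <= 1/2) by (unfold e; eapply Rle_trans; apply Rmin_l).
    assert (He2 : e <= d2/2) by (unfold e; eapply Rle_trans; [apply Rmin_l|apply Rmin_r]).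
    assert (He3 : e <= (D - dC 0) / (2 * K2)) by (unfold e; apply Rmin_r).
    assert (He0 : 0 < e).
    { unfold e. repeat apply Rmin_glb_lt; try lra. apply Rdiv_lt_0_compat; lra. }
    exists e. split; [lra|].
    specialize (Hb2 e ltac:(lra)). rewrite Rplus_0_l in Hb2.
    apply Rabs_le_between in Hb2.
    assert (HeK : e * K2 <= (D - dC 0)/2).
    { apply Rmult_le_compat_r with (r := K2) in He3; [|lra].
      replace ((D - dC 0) / (2 * K2) * K2) with ((D - dC 0)/2) in He3 by (field; lra). lra. }
    assert (HdCe : dC e < D) by lra.
    assert (Hge := Hg e ltac:(lra)).
    assert (HL := Rmax_lip u (e * dC e - C e) 0).
    rewrite Rminus_0_r, (Rabs_pos_eq (e * dC e - C e)) in HL by lra.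
    apply Rabs_le_between in HL.
    rewrite HV0. unfold V. nra. }
  destruct Hsmall as [e [He He']].
  destruct (continuity_ab_maj (fun x => V (Rmax 0 x)) 0 b ltac:(lra)) as [A [HAmax HA]].
  { intros c Hc. destruct (Req_dec c 0) as [->|Hc0].
    -
      intros eps Heps.
      set (K := D + 2 * K1 + Rabs (dC 0) + K2 + 1).
      assert (HK : 0 < K) by (unfold K; pose proof (Rabs_pos (dC 0)); lra).
      exists (Rmin (Rmin d1 d2) (Rmin 1 (eps / K))).
      assert (Hm1 := Rmin_l (Rmin d1 d2) (Rmin 1 (eps / K))).
      assert (Hm2 := Rmin_r (Rmin d1 d2) (Rmin 1 (eps / K))).
      assert (Hm3 := Rmin_l d1 d2). assert (Hm4 := Rmin_r d1 d2).
      assert (Hm5 := Rmin_l 1 (eps / K)). assert (Hm6 := Rmin_r 1 (eps / K)).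
      split.
      { repeat apply Rmin_glb_lt; try lra. apply Rdiv_lt_0_compat; lra. }
      intros x [_ Hx]. simpl in Hx |- *. unfold R_dist in *.
      rewrite Rminus_0_r in Hx. rewrite (Rmax_left 0 0) by lra.
      destruct (Rle_dec x 0) as [Hxn|Hxp].
      + rewrite (Rmax_left 0 x) by lra. rewrite Rminus_diag_eq by auto. rewrite Rabs_R0. lra.
      + rewrite (Rmax_right 0 x) by lra.
        assert (Hxpos : 0 < x) by lra.
        rewrite Rabs_pos_eq in Hx by lra.
        assert (HxK : x * K < eps).
        { assert (x < eps / K) by lra.
          apply Rmult_lt_compat_r with (r := K) in H; [|lra].
          replace (eps / K * K) with eps in H by (field; lra). lra. }
        specialize (Hb1 x ltac:(lra)). specialize (Hb2 x ltac:(lra)).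
        rewrite Rplus_0_l, hC0, Rminus_0_r in Hb1. rewrite Rplus_0_l in Hb2.
        apply Rabs_le_between in Hb1. apply Rabs_le_between in Hb2.
        assert (HL := Rmax_lip u (x * dC x - C x) 0).
        rewrite Rminus_0_r in HL.
        assert (HdC0 := Rabs_pos (dC 0)).
        assert (Habs : Rabs (x * dC x - C x) <= x * (Rabs (dC 0) + K2) + x * K1).
        { apply Rabs_le. assert (Rabs (dC 0) >= dC 0) by (apply Rle_ge, RRle_abs).
          assert (Rabs (dC 0) >= - dC 0) by (rewrite <- Rabs_Ropp; apply Rle_ge, RRle_abs).
          split; nra. }
        rewrite HV0. unfold V. apply Rabs_def1.
        * apply Rabs_le_between in HL. unfold K in HxK. lra.
        * apply Rabs_le_between in HL. unfold K in HxK. assert (0 <= x * D) by nra. lra.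
    - assert (Hcp : 0 < c) by lra.
      change (continuity_pt (comp V (Rmax 0)) c).
      apply continuity_pt_comp.
      + apply lip_cont. intros a0 b0. rewrite Rabs_minus_sym, (Rabs_minus_sym a0).
        apply Rmax_lip.
      + rewrite Rmax_right by lra. unfold V.
        apply Vcont; [apply (deriv_cont C dC)|apply (deriv_cont dC d2C)]; apply hCd' || apply hdCd'; lra. }
  assert (HVmax : forall c, 0 <= c <= b -> V c <= V A).
  { intros c Hc. specialize (HAmax c Hc). rewrite !Rmax_right in HAmax by lra. exact HAmax. }
  assert (HApos : 0 < A).
  { destruct (Req_dec A 0) as [HA0|HA0]; [|lra].
    exfalso. destruct (Rle_dec e b).
    - specialize (HVmax e ltac:(lra)). rewrite HA0 in HVmax. lra.
    - specialize (Hbnear e ltac:(lra)). lra. }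
  assert (HA1 : 0 < A < 1) by lra.
  assert (HVA : forall a, 0 <= a < 1 -> V a <= V A).
  { intros a Ha. destruct (Rle_dec a b).
    - apply HVmax; lra.
    - specialize (Hbnear a ltac:(lra)). specialize (HVmax 0 ltac:(lra)). lra. }
  set (gA := A * dC A - C A).
  set (wL := Rmax 0 (u - gA)).
  assert (HgA : 0 <= gA) by (apply Hg; auto).
  assert (HdCA : 0 < dC A).
  { assert (C 0 < C A) by (apply hCinc; try (split; simpl; lra); lra).
    unfold gA in HgA. nra. }
  assert (HwL0 : 0 <= wL) by apply Rmax_l.
  assert (HwLeq : gA + wL = Rmax u gA).
  { unfold wL, Rmax. repeat destruct Rle_dec; lra. }
  exists A, (dC A + wL), wL, 0, 0.
  assert (Hfeas : feasible C u A (dC A + wL) wL 0 0).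
  { unfold feasible, worker_payoff. split; [lra|]. split.
    - intros a' Ha'. destruct (Req_dec a' A) as [->|Hne]; [lra|].
      pose proof (tangent C dC A a' hCconv HA1 Ha' (hCd' A HA1)). nra.
    - split; [|split; lra].
      assert (HM := Rmax_l u gA). unfold gA in *. nra. }
  split; [|split; [lra|auto]].
  split; auto.
  intros a' wH' wL' bH' bL' Hf.
  eapply Rle_trans; [apply (Hub _ _ _ _ _ Hf)|].
  destruct Hf as [Ha' _].
  eapply Rle_trans; [apply (HVA a' Ha')|].
  unfold V, employer_obj. rewrite heta0.
  fold gA. rewrite <- HwLeq. unfold gA, D. nra.
Qed.
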